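(* Let $a,b\in\mathbb{N}$ with $a,b>1$, $c\in\mathbb{R}$ with $c>0$, and $h:\mathbb{N}\to(0,\infty]$ with $0<h(n)<\infty$ for all $n\in\mathbb{N}$. Consider the recurrence $$T(1)=c,\qquad T(n)=aT(n/b)+h(n)\ \text{ for } n\in\omega_b.$$ Then this recurrence has a unique solution $f_T\in\mathcal{RT}_{b,c}$. Moreover, if there exists $g\in\mathcal{RT}_{b,c}$ such that $\Phi_T$ is an improver with respect to $g$, then $f_T\in\mathcal{O}(g)$.
   Context: $\mathbb{N}$ is the set of positive integers, $\omega$ the nonnegative integers, $\omega_b=\{b^k:k\in\mathbb{N}\}$. $\mathcal{RT}$ is the set of all functions $\mathbb{N}\to(0,\infty]$, and $\mathcal{RT}_{b,c}=\{f\in\mathcal{RT}: f(1)=c \text{ and } f(n)=\infty \text{ for all } n\notin\omega_b \text{ with } n>1\}$. $\Phi_T:\mathcal{RT}_{b,c}\to\mathcal{RT}_{b,c}$ is defined by $\Phi_T(f)(1)=c$, $\Phi_T(f)(n)=\infty$ if $n\notin\omega_b$ and $n>1$, and $\Phi_T(f)(n)=af(n/b)+h(n)$ otherwise. A functional $\Phi:C\to C$ ($C\subseteq\mathcal{RT}$) is an improver with respect to $f\in C$ if $\Phi^{n+1}(f)\le\Phi^n(f)$ pointwise for all $n\in\omega$ (with $\Phi^0(f)=f$). For $f,g\in\mathcal{RT}$, $f\in\mathcal{O}(g)$ means there exist $n_0\in\mathbb{N}$ and $C\ge0$ with $f(n)\le Cg(n)$ for all $n\ge n_0$. *)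

(* Defs.v *)
From HB Require Import structures.
From mathcomp Require Import all_boot all_order all_algebra.
From mathcomp Require Import boolp classical_sets reals constructive_ereal ereal.
Set Implicit Arguments. Unset Strict Implicit. Unset Printing Implicit Defensive.
Import Order.TTheory GRing.Theory Num.Theory.
Local Open Scope ring_scope.
Local Open Scope ereal_scope.

(* Functions N -> (0,oo] are functions nat -> \bar R; only positive
   arguments n >= 1 are meaningful (the value at 0 is ignored). *)

Definition in_omega (b n : nat) : Prop := exists k : nat, (0 < k)%N /\ n = (b ^ k)%N.

Definition inRT {R : realType} (f : nat -> \bar R) : Prop :=
  forall n : nat, (0 < n)%N -> 0 < f n.

Definition inRTbc {R : realType} (b : nat) (c : R) (f : nat -> \bar R) : Prop :=
  inRT f /\ f 1%N = c%:E /\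
  (forall n : nat, (1 < n)%N -> ~ in_omega b n -> f n = +oo).

Definition solves_rec {R : realType} (a b : nat) (c : R) (h : nat -> \bar R)
    (f : nat -> \bar R) : Prop :=
  inRTbc b c f /\
  (forall n : nat, in_omega b n -> f n = (a%:R)%:E * f (n %/ b)%N + h n).

Definition PhiT {R : realType} (a b : nat) (c : R) (h : nat -> \bar R)
    (f : nat -> \bar R) : nat -> \bar R :=
  fun n => if n == 1%N then c%:E
           else if `[< in_omega b n >] then (a%:R)%:E * f (n %/ b)%N + h n
           else +oo.

Definition improver {R : realType} (Phi : (nat -> \bar R) -> (nat -> \bar R))
    (g : nat -> \bar R) : Prop :=
  forall (k n : nat), (0 < n)%N -> iter k.+1 Phi g n <= iter k Phi g n.

Definition bigO {R : realType} (f g : nat -> \bar R) : Prop :=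
  exists (n0 : nat) (C : R), (0 < n0)%N /\ (0 <= C)%R /\
    forall n : nat, (n0 <= n)%N -> f n <= C%:E * g n.

(* Main.v *)
Require Import Defs.
From HB Require Import structures.
From mathcomp Require Import all_boot all_order all_algebra.
From mathcomp Require Import boolp classical_sets reals constructive_ereal ereal.
Import Order.TTheory GRing.Theory Num.Theory.
Local Open Scope ring_scope.
Local Open Scope ereal_scope.

Section Aux.
Variables (R : realType) (a b : nat) (c : R) (h : nat -> \bar R).
Hypothesis hb : (1 < b)%N.

Fixpoint FF (j : nat) : \bar R :=
  match j with 0 => c%:E | j'.+1 => (a%:R)%:E * FF j' + h (b ^ j'.+1)%N end.

Lemma pow_gt1 k : (0 < k)%N -> (1 < b ^ k)%N.
Proof. by move=> hk; rewrite -{1}(expn0 b) ltn_exp2l. Qed.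

Lemma pow_div k : ((b ^ k.+1) %/ b)%N = (b ^ k)%N.
Proof. by rewrite expnSr mulnK // ltnW. Qed.

Lemma om_pow k : in_omega b (b ^ k.+1)%N.
Proof. by exists k.+1. Qed.

Lemma PhiT1 f : PhiT a b c h f 1%N = c%:E.
Proof. by rewrite /PhiT eqxx. Qed.

Lemma PhiTpow f k : PhiT a b c h f (b ^ k.+1)%N =
   (a%:R)%:E * f (b ^ k)%N + h (b ^ k.+1)%N.
Proof.
rewrite /PhiT ifN_eq; last by rewrite gtn_eqF // pow_gt1.
by rewrite asboolT ?pow_div //; apply: om_pow.
Qed.

Lemma PhiTelse f n : n != 1%N -> ~ in_omega b n -> PhiT a b c h f n = +oo.
Proof. by move=> h1 h2; rewrite /PhiT ifN_eq // asboolF. Qed.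

Lemma iterL g : g 1%N = c%:E -> forall j k, (j <= k)%N ->
  iter k (PhiT a b c h) g (b ^ j)%N = FF j.
Proof.
move=> g1; elim=> [|j IH] k hk.
  rewrite expn0 /=; case: k hk => [|k] _ /=; first by [].
  by rewrite PhiT1.
case: k hk => [//|k] hk; rewrite iterS PhiTpow IH //.
Qed.
End Aux.

Theorem corollary9 (R : realType) (a b : nat) (c : R) (h : nat -> \bar R) :
  (1 < a)%N -> (1 < b)%N -> (0 < c)%R ->
  (forall n : nat, (0 < n)%N -> 0 < h n /\ h n < +oo) ->
  exists fT : nat -> \bar R,
    solves_rec a b c h fT /\
    (forall f : nat -> \bar R, solves_rec a b c h f ->
       forall n : nat, (0 < n)%N -> f n = fT n) /\
    (forall g : nat -> \bar R, inRTbc b c g ->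
       improver (PhiT a b c h) g -> bigO fT g).
Proof.
move=> ha hb hc hh.
pose g0 := fun _ : nat => c%:E.
pose fT := fun n => iter n (PhiT a b c h) g0 n.
have fTpow : forall k, fT (b ^ k)%N = @FF R a b c h k.
  by move=> k; rewrite /fT (@iterL R a b c h hb) // ltnW // ltn_expl.
have fT1 : fT 1%N = c%:E by rewrite /fT /= PhiT1.
have fTelse : forall n, (1 < n)%N -> ~ in_omega b n -> fT n = +oo.
  move=> n hn ho; rewrite /fT; case: n hn ho => [//|n] hn ho.
  by rewrite iterS PhiTelse // gtn_eqF.
have cases : forall n, (0 < n)%N -> n = 1%N \/ (exists k, n = (b ^ k.+1)%N) \/
    ((1 < n)%N /\ ~ in_omega b n).
  move=> n hn; case: (boolP (n == 1%N)) => [/eqP->|n1]; first by left.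
  right; case: (pselect (in_omega b n)) => [[[|k] [hk ->]]|ho] //.
    by left; exists k.
  by right; split=> //; rewrite ltn_neqAle eq_sym n1.
have FFpos : forall k, 0 < @FF R a b c h k.
  elim=> [|k IH] /=; first by rewrite lte_fin.
  have [h1 _] := hh (b ^ k.+1)%N (ltnW (@pow_gt1 b hb k.+1 (ltn0Sn k))).
  apply: lt_le_trans h1 _; rewrite leeDr //.
  by apply: mule_ge0; [rewrite lee_fin ler0n | apply: ltW].
exists fT; split; [split; [split; [|split]|] | split].
- move=> n hn; have [->|[[k ->]|[h1 ho]]] := cases n hn.
  + by rewrite fT1 lte_fin.
  + by rewrite fTpow.
  + by rewrite fTelse.
- exact: fT1.
- exact: fTelse.
- move=> n [[|k] [hk ->]] //; by rewrite pow_div // !fTpow.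
- move=> f [[_ [f1 fe]] fr].
  have fpow : forall k, f (b ^ k)%N = @FF R a b c h k.
    elim=> [|k IH]; first by rewrite expn0 f1.
    by rewrite fr; [rewrite pow_div // IH | apply: om_pow].
  move=> n hn; have [->|[[k ->]|[h1 ho]]] := cases n hn.
  + by rewrite f1 fT1.
  + by rewrite fpow fTpow.
  + by rewrite fe // fTelse.
- move=> g [_ [g1 ge]] himp.
  have chain : forall k n, (0 < n)%N -> iter k (PhiT a b c h) g n <= g n.
    elim=> [|k IH] n hn; first exact: lexx.
    exact: le_trans (himp k n hn) (IH n hn).
  exists 1%N, 1%R; split=> //; split=> // n hn; rewrite mul1e.
  have [->|[[k ->]|[h1 ho]]] := cases n hn.
  + by rewrite fT1 g1.
  + rewrite fTpow; have <- := @iterL R a b c h hb g g1 k.+1 k.+1 (leqnn k.+1); apply: chain.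
    exact: ltnW (@pow_gt1 b hb k.+1 (ltn0Sn k)).
  + by rewrite ge // fTelse.
Qed.
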